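(* Suppose $f$ and $g$ are coprime in $\mathbb{Q}[t]$. Then there exists a positive integer $\Lambda$ such that $n\mid\Lambda$ whenever $n$ is a positive integer with $n^{12}\mid\gcd(A(a,b)^3,B(a,b)^2)$ for some $(a,b)\in\mathcal{T}_{\upsilon,\tau}$.
   Context: Fix $\upsilon\in\{1,2\}$ and positive integers $m,\tau$ with $m=1$ or $\upsilon\tau=1$. Let $f,g\in\mathbb{Z}[t]$ with $4f^3+27g^2\ne0$, no common real root, and $\max\{\frac12\deg f,\frac13\deg g\}=\frac{2m}{\upsilon\tau}$. Let $\varsigma=2m$ if $\upsilon=1$, $\varsigma=1$ if $\upsilon=2$; $A(x,y)=y^{2\varsigma}f(x/y^\tau)$, $B(x,y)=y^{3\varsigma}g(x/y^\tau)\in\mathbb{Z}[x,y]$. $\mathcal{T}_{\upsilon,\tau}=\{(a,b)\in\mathbb{Z}^2\setminus\{(0,0)\}:p^{\upsilon\tau}\nmid\gcd(a,b^\tau)\text{ for every prime }p\}$. *)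

(* Defs.v *)
From HB Require Import structures.
From mathcomp Require Import all_boot all_order all_algebra.
From mathcomp Require Import Rstruct.
Set Implicit Arguments. Unset Strict Implicit. Unset Printing Implicit Defensive.
Import Order.TTheory GRing.Theory Num.Theory.
Local Open Scope ring_scope.

Definition varsigma (ups m : nat) : nat := if ups == 1%N then (2 * m)%N else 1%N.

(* A(x,y) = y^(2 s) f(x / y^tau) evaluated at integers (a,b):
   sum_i f_i a^i b^(2 s - tau i).  Under the degree hypothesis all exponents
   2 s - tau i (i < size f) are genuinely nonnegative. *)
Definition Aform (ups m tau : nat) (f : {poly int}) (a b : int) : int :=
  \sum_(i < size f) f`_i * a ^+ i * b ^+ (2 * varsigma ups m - tau * i)%N.

(* B(x,y) = y^(3 s) g(x / y^tau) *)
Definition Bform (ups m tau : nat) (g : {poly int}) (a b : int) : int :=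
  \sum_(i < size g) g`_i * a ^+ i * b ^+ (3 * varsigma ups m - tau * i)%N.

Definition inT (ups tau : nat) (a b : int) : Prop :=
  (a, b) <> (0, 0) /\
  forall p : nat, prime p -> ~~ (((p ^ (ups * tau))%N)%:Z %| gcdz a (b ^+ tau))%Z.

Definition degp (p : {poly int}) : nat := (size p).-1.

(* Main.v *)
Require Import Defs.
From HB Require Import structures.
From mathcomp Require Import all_boot all_order all_algebra.
From mathcomp Require Import Rstruct.
From mathcomp Require Import zify ring lra.
Import Order.TTheory GRing.Theory Num.Theory.
Local Open Scope ring_scope.

Definition vz (p : nat) (x : int) : nat := logn p `|x|%N.
Definition Pz (p j : nat) (x : int) : bool := (((p%:Z) ^+ j) %| x)%Z.

Lemma Pz_v p k x : prime p -> x != 0 -> Pz p k x = (k <= vz p x)%N.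
Proof. by move=> pp x0; rewrite /Pz dvdzE abszX /= pfactor_dvdn // absz_gt0. Qed.

Lemma Pz0 p k : Pz p k 0.
Proof. exact: dvdz0. Qed.

Lemma vzM p x y : x != 0 -> y != 0 -> vz p (x * y) = (vz p x + vz p y)%N.
Proof. by move=> x0 y0; rewrite /vz abszM lognM // absz_gt0. Qed.

Lemma vzX p x k : vz p (x ^+ k) = (k * vz p x)%N.
Proof. by rewrite /vz abszX lognX. Qed.

Lemma vzp p k : prime p -> vz p ((p%:Z) ^+ k) = k.
Proof. by move=> pp; rewrite /vz abszX pfactorK. Qed.

Lemma Pz_le p j k x : (j <= k)%N -> Pz p k x -> Pz p j x.
Proof. by move=> jk; apply: dvdz_trans; apply: dvdz_exp2l. Qed.

Lemma PzD p k x y : Pz p k x -> Pz p k y -> Pz p k (x + y).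
Proof. exact: rpredD. Qed.

Lemma PzM p j k x y : Pz p j x -> Pz p k y -> Pz p (j + k) (x * y).
Proof. by move=> hx hy; rewrite /Pz exprD; apply: dvdz_mul. Qed.

Lemma PzX p j k x : Pz p j x -> Pz p (k * j) (x ^+ k).
Proof. by move=> hx; rewrite /Pz mulnC exprM; apply: dvdz_exp2r. Qed.

Lemma Pz_sum p k n (F : 'I_n -> int) : (forall i, Pz p k (F i)) -> Pz p k (\sum_(i < n) F i).
Proof. by move=> H; elim/big_ind: _ => //; [exact: Pz0 | exact: PzD]. Qed.

Lemma vzD p x y : prime p -> x != 0 -> Pz p (vz p x).+1 y ->
  x + y != 0 /\ vz p (x + y) = vz p x.
Proof.
move=> pp x0 hy.
have nx : ~~ Pz p (vz p x).+1 x by rewrite Pz_v // ltnn.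
move: nx hy; set k := vz p x => nx hy.
have xy0 : x + y != 0.
  apply/eqP => e; have ey : x = - y by rewrite -[x](addrK y) e add0r.
  by move: nx; rewrite ey /Pz rpredN; move: hy; rewrite /Pz => ->.
split => //; apply/eqP; rewrite eqn_leq; apply/andP; split.
  rewrite leqNgt; apply/negP => lt; move: nx.
  have : Pz p k.+1 (x + y) by rewrite Pz_v.
  rewrite /Pz => h /negP; apply; rewrite -(addrK y x); exact: rpredB.
rewrite -Pz_v //; apply: PzD; first by rewrite Pz_v.
exact: Pz_le hy.
Qed.
Definition hom (tau k : nat) (h : {poly int}) (x y : int) : int :=
  \sum_(i < size h) h`_i * x ^+ i * y ^+ (k - tau * i)%N.

Lemma homE (tau k : nat) (h : {poly int}) (x y : int) : y != 0 -> (tau * (size h).-1 <= k)%N ->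
  (hom tau k h x y)%:~R = (y%:~R : rat) ^+ k * (map_poly intr h).[x%:~R / (y%:~R) ^+ tau].
Proof.
move=> y0 hk.
rewrite horner_coef size_map_inj_poly //; last exact: intr_inj.
rewrite /hom rmorph_sum mulr_sumr; apply: eq_bigr => i _.
rewrite coef_map /= !rmorphM !rmorphXn /=.
have hi : (tau * i <= k)%N.
  apply: leq_trans hk; rewrite leq_mul2l; apply/orP; right.
  by rewrite -ltnS prednK ?ltn_ord // (leq_trans _ (ltn_ord i)).
have yn0 : (y%:~R : rat) != 0 by rewrite intr_eq0.
rewrite -{2}(subnK hi) exprD exprMn exprVn -exprM.
have : (y%:~R : rat) ^+ (tau * i) != 0 by rewrite expf_neq0.
move: ((y%:~R : rat) ^+ (tau * i)) => Y Y0.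
move: ((h`_i)%:~R : rat) (x%:~R ^+ i : rat) ((y%:~R : rat) ^+ (k - tau * i)) => A B C.
by field.
Qed.

Lemma hom_scale (tau k : nat) (h : {poly int}) (lam x y : int) : (tau * (size h).-1 <= k)%N ->
  hom tau k h (lam ^+ tau * x) (lam * y) = lam ^+ k * hom tau k h x y.
Proof.
move=> hk; rewrite /hom mulr_sumr; apply: eq_bigr => i _.
have hi : (tau * i <= k)%N.
  apply: leq_trans hk; rewrite leq_mul2l; apply/orP; right.
  by rewrite -ltnS prednK ?ltn_ord // (leq_trans _ (ltn_ord i)).
rewrite !exprMn -exprM -{3}(subnK hi) exprD mulnC.
ring.
Qed.
Lemma bezout_int (f g : {poly int}) :
  coprimep (map_poly intr f : {poly rat}) (map_poly intr g) ->
  exists (D : int) (u v : {poly int}), D != 0 /\ forall t : rat,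
    (map_poly intr u).[t] * (map_poly intr f).[t] + (map_poly intr v).[t] * (map_poly intr g).[t] = D%:~R.
Proof.
case/Bezout_eq1_coprimepP => [[u0 v0] /= e].
case: (rat_poly_scale u0) => u1 [c1 c10 eu].
case: (rat_poly_scale v0) => v1 [c2 c20 ev].
exists (c1 * c2), (c2 *: u1), (c1 *: v1); split; first by rewrite mulf_neq0.
move=> t.
have := congr1 (horner^~ t) e; rewrite hornerD !hornerM hornerC eu ev !hornerZ => e1.
rewrite !map_polyZ !hornerZ /=.
have c1r : (c1%:~R : rat) != 0 by rewrite intr_eq0.
have c2r : (c2%:~R : rat) != 0 by rewrite intr_eq0.
rewrite rmorphM /=.
move: e1; set U := (map_poly intr u1).[t]; set V := (map_poly intr v1).[t].
set F := (map_poly intr f).[t]; set G := (map_poly intr g).[t] => e1.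
move: e1 c1r c2r; clearbody U V F G.
move: (c1%:~R : rat) (c2%:~R : rat) => a1 a2 e1 a10 a20.
transitivity ((a1 * a2) * (a1^-1 * U * F + a2^-1 * V * G)).
  have H : forall b1 b2 U F V G : rat, b1 != 0 -> b2 != 0 ->
    b2*U*F + b1*V*G = b1*b2*(b1^-1*U*F + b2^-1*V*G) by move=> ? ? ? ? ? ? h1 h2; field; rewrite h1 h2.
  exact: H.
by rewrite e1 mulr1.
Qed.
Lemma hom_bezout tau s (f g u v : {poly int}) (D : int) N :
  (forall t : rat, (map_poly intr u).[t] * (map_poly intr f).[t] + (map_poly intr v).[t] * (map_poly intr g).[t] = D%:~R) ->
  (tau * (size f).-1 <= 2 * s)%N -> (tau * (size g).-1 <= 3 * s)%N ->
  (tau * (size u).-1 <= N - 2 * s)%N -> (tau * (size v).-1 <= N - 3 * s)%N -> (3 * s <= N)%N ->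
  forall x y : int, y != 0 ->
  D * y ^+ N = hom tau (N - 2 * s) u x y * hom tau (2 * s) f x y + hom tau (N - 3 * s) v x y * hom tau (3 * s) g x y.
Proof.
move=> hb hf hg hu hv hN x y y0.
apply: (@intr_inj rat); rewrite intrD !intrM !homE // rmorphXn /=.
rewrite mulrACA -exprD subnK; last by lia.
rewrite [X in _ = _ + X]mulrACA -exprD subnK //.
by rewrite -mulrDr hb mulrC.
Qed.
Lemma PzMl p k (x y : int) : Pz p k y -> Pz p k (x * y).
Proof. exact: dvdz_mull. Qed.

Lemma Pz_cancel p k e (q X : int) : prime p -> q != 0 -> Pz p k (q * X) ->
  (vz p q + e <= k)%N -> Pz p e X.
Proof.
move=> pp q0 h le; have [->|X0] := eqVneq X 0; first exact: Pz0.
move: h; rewrite !Pz_v ?mulf_neq0 // vzM // => h; lia.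
Qed.

Lemma caseI p e tau s N (D : int) (u v f g : {poly int}) (a b : int) :
  prime p -> D != 0 ->
  (forall x y : int, y != 0 -> D * y ^+ N = hom tau (N - 2*s) u x y * hom tau (2*s) f x y
      + hom tau (N - 3*s) v x y * hom tau (3*s) g x y) ->
  (tau * (size f).-1 <= 2*s)%N -> (tau * (size g).-1 <= 3*s)%N ->
  b != 0 -> Pz p (tau * vz p b) a ->
  (2*s*vz p b + e <= 4*e)%N -> (3*s*vz p b + e <= 6*e)%N ->
  Pz p (4*e) (hom tau (2*s) f a b) -> Pz p (6*e) (hom tau (3*s) g a b) ->
  (e <= vz p D)%N.
Proof.
move=> pp D0 hbez hf hg b0 hPa h1 h2 hA hB.
set be := vz p b in hPa h1 h2.
set lam := (p%:Z) ^+ be.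
have lam0 : lam != 0 by rewrite expf_neq0 // eqz_nat -lt0n prime_gt0.
have vlam : vz p lam = be by rewrite vzp.
have hPb : Pz p be b by rewrite Pz_v.
have ea : a = lam ^+ tau * (a %/ lam ^+ tau)%Z.
  by rewrite mulrC divzK // /lam -exprM mulnC.
have eb : b = lam * (b %/ lam)%Z by rewrite mulrC divzK.
set a1 := (a %/ lam ^+ tau)%Z in ea; set b1 := (b %/ lam)%Z in eb.
have b10 : b1 != 0 by apply: contraNneq b0 => e0; rewrite eb e0 mulr0.
have vb1 : vz p b1 = 0%N.
  have : vz p b = (be + vz p b1)%N by rewrite {1}eb vzM // vlam.
  rewrite -/be; lia.
move: hA hB; rewrite ea eb !hom_scale // => hA hB.
have hA1 : Pz p e (hom tau (2*s) f a1 b1).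
  apply: Pz_cancel pp _ hA _; first by rewrite expf_neq0.
  by rewrite vzX vlam; lia.
have hB1 : Pz p e (hom tau (3*s) g a1 b1).
  apply: Pz_cancel pp _ hB _; first by rewrite expf_neq0.
  by rewrite vzX vlam; lia.
have : Pz p e (D * b1 ^+ N) by rewrite (hbez a1 b1 b10) PzD // PzMl.
rewrite Pz_v ?mulf_neq0 ?expf_neq0 // vzM ?expf_neq0 // vzX vb1; lia.
Qed.
Lemma caseIIa p e k tau w (h : {poly int}) (a b : int) :
  prime p -> a != 0 -> lead_coef h != 0 -> (tau * (size h).-1 = w)%N ->
  Pz p (vz p a + vz p (lead_coef h)).+1 (b ^+ tau) ->
  (w * vz p a < k * tau)%N -> (0 < e)%N -> (0 < tau)%N ->
  Pz p (k * e) (hom tau w h a b) -> (e <= vz p (lead_coef h))%N.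
Proof.
move=> pp a0 l0 hw hb hwk e0 t0 hH.
set c := vz p (lead_coef h) in hb *.
set al := vz p a in hb hwk.
have hsz : size h = (size h).-1.+1.
  by rewrite prednK // lt0n size_poly_eq0 -lead_coef_eq0.
set d := (size h).-1 in hw hsz.
move: hH; rewrite /hom.
have -> : \sum_(i < size h) h`_i * a ^+ i * b ^+ (w - tau * i)%N =
          \sum_(i < d.+1) h`_i * a ^+ i * b ^+ (w - tau * i)%N.
  by rewrite hsz.
rewrite big_ord_recr /= -hw subnn expr0 mulr1.
have ld : h`_d = lead_coef h by rewrite lead_coefE.
rewrite ld addrC.
have hx0 : lead_coef h * a ^+ d != 0 by rewrite mulf_neq0 // expf_neq0.
have vx : vz p (lead_coef h * a ^+ d) = (c + d * al)%N by rewrite vzM ?expf_neq0 // vzX.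
have hrest : Pz p (vz p (lead_coef h * a ^+ d)).+1
    (\sum_(i < d) h`_(widen_ord (leqnSn d) i) * a ^+ i * b ^+ (tau * d - tau * i)%N).
  rewrite vx; apply: Pz_sum => i.
  have hi : (i < d)%N := ltn_ord i.
  rewrite -mulnBr exprM -mulrA; apply: PzMl.
  apply: (@Pz_le _ _ (i * al + (d - i) * (al + c).+1)%N); first by nia.
  apply: PzM; apply: PzX; last exact: hb.
  by rewrite Pz_v.
have [_ vs] := vzD _ _ _ pp hx0 hrest.
rewrite Pz_v //; last by case: (vzD _ _ _ pp hx0 hrest).
rewrite vs vx => hke.
have hdk : (d * al < k)%N.
  have h3 : (tau * d * al < k * tau)%N by rewrite hw.
  rewrite -(ltn_pmul2r t0); nia.
nia.
Qed.
Lemma caseIIb p e tau s N (D : int) (u v f g : {poly int}) (c : nat) (a b : int) :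
  prime p -> D != 0 ->
  (forall x y : int, y != 0 -> D * y ^+ N = hom tau (N - 2*s) u x y * hom tau (2*s) f x y
      + hom tau (N - 3*s) v x y * hom tau (3*s) g x y) ->
  b != 0 -> a != 0 ->
  ~~ Pz p (vz p a + c).+1 (b ^+ tau) -> ~~ Pz p (tau * vz p b) a -> (vz p a < 2 * tau)%N ->
  Pz p (4*e) (hom tau (2*s) f a b) -> Pz p (4*e) (hom tau (3*s) g a b) ->
  (e <= vz p D + N * (2 * tau + 1) * c)%N.
Proof.
move=> pp D0 hbez b0 a0 hb ha hal hA hB.
move: hb ha; rewrite !Pz_v ?expf_neq0 // vzX -!ltnNge => hb ha.
have : Pz p (4 * e) (D * b ^+ N) by rewrite (hbez a b b0) PzD // PzMl.
rewrite Pz_v ?mulf_neq0 ?expf_neq0 // vzM ?expf_neq0 // vzX => hD.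
set al := vz p a in hb ha hal; set be := vz p b in hb ha hD.
have hc : (1 <= c)%N by lia.
have t0 : (0 < tau)%N by rewrite lt0n; apply/eqP => t0; move: ha; rewrite t0 mul0n.
have hbe0 : (be <= tau * be)%N by rewrite leq_pmull.
have hbe : (be <= al + c)%N by lia.
have h2 : (2 * tau <= 2 * tau * c)%N by rewrite leq_pmulr.
have h1 : (N * be <= N * (2 * tau + 1) * c)%N.
  rewrite -mulnA leq_mul2l; apply/orP; right; rewrite mulnDl mul1n; lia.
lia.
Qed.
Lemma ratle (x k a z : nat) : (0 < k)%N -> (0 < z)%N ->
  ((x%:R / k%:R : rat) <= a%:R / z%:R) = (x * z <= a * k)%N.
Proof.
move=> k0 z0.
rewrite ler_pdivrMr ?ltr0n // mulrAC ler_pdivlMr ?ltr0n //.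
by rewrite -!natrM ler_nat.
Qed.

Lemma rateq (x k a z : nat) : (0 < k)%N -> (0 < z)%N ->
  ((x%:R / k%:R : rat) = a%:R / z%:R) -> (x * z = a * k)%N.
Proof.
move=> k0 z0 /eqP; rewrite eqr_div ?pnatr_eq0 -?lt0n // -!natrM eqr_nat.
by move/eqP.
Qed.

Lemma deg_facts (ups m tau df dg : nat) : (ups = 1 \/ ups = 2)%N -> (0 < m)%N -> (0 < tau)%N ->
  (m = 1 \/ ups * tau = 1)%N ->
  Num.max (df%:R / 2 : rat) (dg%:R / 3) = (2 * m)%:R / (ups * tau)%:R ->
  [/\ (tau * df <= 2 * varsigma ups m)%N, (tau * dg <= 3 * varsigma ups m)%N &
      (tau * df = 2 * varsigma ups m \/ tau * dg = 3 * varsigma ups m)%N].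
Proof.
move=> hu m0 t0 hm hmax.
have ut0 : (0 < ups * tau)%N by case: hu => ->; lia.
have h1 : (df * (ups * tau) <= 2 * m * 2)%N.
  by rewrite -(@ratle df 2 (2 * m) (ups * tau) isT ut0) -hmax le_max lexx.
have h2 : (dg * (ups * tau) <= 2 * m * 3)%N.
  by rewrite -(@ratle dg 3 (2 * m) (ups * tau) isT ut0) -hmax le_max lexx orbT.
have h3 : (df * (ups * tau) = 2 * m * 2 \/ dg * (ups * tau) = 2 * m * 3)%N.
  have [hxy|hxy] := leP (df%:R / 2 : rat) (dg%:R / 3).
    by right; apply: (@rateq dg 3 (2 * m) (ups * tau) isT ut0); rewrite -hmax max_r.
  by left; apply: (@rateq df 2 (2 * m) (ups * tau) isT ut0); rewrite -hmax max_l // ltW.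
rewrite /varsigma; case: hu => hu; subst ups => /=.
  split; lia.
have hm1 : m = 1%N by case: hm => //; lia.
split; lia.
Qed.
Lemma PzE p k x : Pz p k x = (p ^ k %| `|x|)%N.
Proof. by rewrite /Pz dvdzE abszX. Qed.

Lemma PoszX (n k : nat) : (n ^ k)%N%:Z = (n%:Z) ^+ k.
Proof. by rewrite -!natz natrX. Qed.

Lemma Pz_root p k e x : prime p -> Pz p (k * e) (x ^+ k) -> (0 < k)%N -> Pz p e x.
Proof.
move=> pp h k0; have [->|x0] := eqVneq x 0; first exact: Pz0.
move: h; rewrite !Pz_v ?expf_neq0 // vzX leq_pmul2l //.
Qed.

Theorem lemma2p7 (ups m tau : nat) (f g : {poly int}) :
  (ups = 1%N \/ ups = 2%N) -> (0 < m)%N -> (0 < tau)%N ->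
  (m = 1%N \/ (ups * tau = 1)%N) ->
  4%:P * f ^+ 3 + 27%:P * g ^+ 2 != 0 ->
  ~ (exists x : Rdefinitions.R, (map_poly intr f).[x] = 0 /\ (map_poly intr g).[x] = 0) ->
  Num.max ((degp f)%:R / 2 : rat) ((degp g)%:R / 3) = (2 * m)%:R / (ups * tau)%:R ->
  coprimep (map_poly intr f : {poly rat}) (map_poly intr g) ->
  exists Lambda : nat, (0 < Lambda)%N /\
    forall n : nat, (0 < n)%N ->
      (exists a b : int, inT ups tau a b /\
         ((n ^ 12)%N%:Z %| gcdz (Aform ups m tau f a b ^+ 3) (Bform ups m tau g a b ^+ 2))%Z) ->
      (n %| Lambda)%N.
Proof.
move=> hu m0 t0 hm _ _ hmax hcop.
have [hf hg htight] := deg_facts _ _ _ (degp f) (degp g) hu m0 t0 hm hmax.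
rewrite /degp in hf hg htight.
set s := varsigma ups m in hf hg htight.
have s0 : (0 < s)%N by rewrite /s /varsigma; case: ifP => _; lia.
have hsa : forall al, (al < ups * tau)%N -> (s * al < 2 * tau)%N.
  move=> al; rewrite /s /varsigma; move: hm; case: hu => -> /=.
    case=> [->|]; lia.
  case=> _; lia.
have hsb : forall be e, (be < ups)%N -> (0 < e)%N ->
    (2 * s * be + e <= 4 * e)%N /\ (3 * s * be + e <= 6 * e)%N.
  move=> be e; rewrite /s /varsigma; case: hu => -> /=.
    move=> hb he; have -> : be = 0%N by lia. lia.
  move=> hb he; lia.
have hut : (ups * tau <= 2 * tau)%N by case: hu => ->; lia.
have [D [u [v [D0 hb]]]] := bezout_int f g hcop.
set N := (3 * s + tau * (size u + size v))%N.
have hN1 : (tau * (size u).-1 <= N - 2 * s)%N.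
  rewrite /N; have : (tau * (size u).-1 <= tau * (size u + size v))%N.
    by rewrite leq_mul2l; apply/orP; right; rewrite (leq_trans (leq_pred _)) // leq_addr.
  lia.
have hN2 : (tau * (size v).-1 <= N - 3 * s)%N.
  rewrite /N; have : (tau * (size v).-1 <= tau * (size u + size v))%N.
    by rewrite leq_mul2l; apply/orP; right; rewrite (leq_trans (leq_pred _)) // leq_addl.
  lia.
have hN3 : (3 * s <= N)%N by rewrite /N leq_addr.
have hbez := hom_bezout tau s f g u v D N hb hf hg hN1 hN2 hN3.
have [h [w [k [hl0 [hw [hwk hk]]]]]] : exists (h : {poly int}) (w k : nat), (lead_coef h != 0) /\ (tau * (size h).-1 = w)%N /\
    (forall al, (al < ups * tau)%N -> (w * al < k * tau)%N) /\
    (forall p e a b, Pz p (4 * e) (hom tau (2 * s) f a b) -> Pz p (6 * e) (hom tau (3 * s) g a b) ->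
       Pz p (k * e) (hom tau w h a b)).
  case: htight => ht.
    exists f, (2 * s)%N, 4%N; split; last split => //; last split.
    - rewrite lead_coef_eq0; apply/eqP => f0; move: ht; rewrite f0 size_poly0 /=; lia.
    - by move=> al /hsa; lia.
    - by move=> p e a b hA _.
  exists g, (3 * s)%N, 6%N; split; last split => //; last split.
  - rewrite lead_coef_eq0; apply/eqP => g0; move: ht; rewrite g0 size_poly0 /=; lia.
  - by move=> al /hsa; lia.
  - by move=> p e a b _ hB.
set c0 := lead_coef h.
set K := (N * (2 * tau + 1)).+1.
have hl0' : (0 < `|c0|)%N by rewrite absz_gt0.
have hD0' : (0 < `|D|)%N by rewrite absz_gt0.
exists (`|D| * `|c0| ^ K)%N; split; first by rewrite muln_gt0 hD0' expn_gt0 hl0'.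
move=> n n0 [a [b [[ab0 hT] hdiv]]].
apply/dvdn_partP => // p pi.
have pp : prime p by move: pi; rewrite mem_primes => /andP [].
have e0 : (0 < logn p n)%N by rewrite logn_gt0.
rewrite p_part pfactor_dvdn ?muln_gt0 ?hD0' ?expn_gt0 ?hl0' //.
have hK : (0 < `|c0| ^ K)%N by rewrite expn_gt0 hl0'.
rewrite (lognM p hD0' hK) lognX.
rewrite -/(vz p D) -/(vz p c0).
set e := logn p n in e0 *.
have hpn : (p ^ e %| n)%N by rewrite pfactor_dvdn.
move: hdiv; rewrite dvdz_gcd => /andP [h3 h2].
have h12 : (p ^ (12 * e) %| n ^ 12)%N by rewrite mulnC expnM dvdn_exp2r.
have hA : Pz p (4 * e) (hom tau (2 * s) f a b).
  apply: (Pz_root _ 3 _ _ pp) => //; rewrite mulnA PzE.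
  by apply: dvdn_trans h12 _; move: h3; rewrite dvdzE.
have hB : Pz p (6 * e) (hom tau (3 * s) g a b).
  apply: (Pz_root _ 2 _ _ pp) => //; rewrite mulnA PzE.
  by apply: dvdn_trans h12 _; move: h2; rewrite dvdzE.
have hT' : ~~ (Pz p (ups * tau) a && Pz p (ups * tau) (b ^+ tau)).
  by move: (hT p pp); rewrite PoszX dvdz_gcd.
case: (boolP ((b != 0) && Pz p (tau * vz p b) a)) => [/andP [b0 hPa] | hII].
  have hbu : (vz p b < ups)%N.
    rewrite ltnNge; apply/negP => hle; move/negP: hT'; apply; apply/andP; split.
      by apply: Pz_le hPa; rewrite mulnC leq_mul2l hle orbT.
    by rewrite Pz_v ?expf_neq0 // vzX mulnC leq_mul2l hle orbT.
  have [hs1 hs2] := hsb _ _ hbu e0.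
  have := caseI p e tau s N D u v f g a b pp D0 hbez hf hg b0 hPa hs1 hs2 hA hB.
  by move=> hx; apply: leq_trans hx (leq_addr _ _).
have a0 : a != 0.
  have [b0|b0] := eqVneq b 0.
    by apply/eqP => a0; apply: ab0; rewrite a0 b0.
  by apply: contraNneq hII => ->; rewrite b0 Pz0.
have hal : (vz p a < ups * tau)%N.
  rewrite ltnNge; apply/negP => hle; move/negP: hT'; apply; apply/andP; split.
    by rewrite Pz_v.
  have [->|b0] := eqVneq b 0; first by rewrite expr0n gtn_eqF // Pz0.
  move: hII; rewrite b0 /= Pz_v // -ltnNge => hlt.
  by rewrite Pz_v ?expf_neq0 // vzX; apply: leq_trans hle (ltnW hlt).
case: (boolP (Pz p (vz p a + vz p c0).+1 (b ^+ tau))) => hIIa.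
  have := caseIIa p e k tau w h a b pp a0 hl0 hw hIIa (hwk _ hal) e0 t0 (hk p e a b hA hB).
  rewrite -/c0 => hec.
  apply: leq_trans hec _; apply: leq_trans (leq_addl (vz p D) _); rewrite leq_pmull //.
have b0 : b != 0 by apply: contraNneq hIIa => ->; rewrite expr0n gtn_eqF // Pz0.
have h46 : (4 * e <= 6 * e)%N by rewrite leq_mul2r orbT.
have hII' : ~~ Pz p (tau * vz p b) a by move: hII; rewrite b0.
have := caseIIb p e tau s N D u v f g (vz p c0) a b pp D0 hbez b0 a0 hIIa hII'
  (leq_trans hal hut) hA (Pz_le _ _ _ _ h46 hB).
by move=> hx; apply: leq_trans hx _; rewrite leq_add2l /K mulSn leq_addl.
Qed.
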